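(* Let $k>1$, let $n=2m$ be even, and let $f:\mathbb{F}_2^n\to\mathbb{Z}_{2^k}$. For $\mathbf{u}\in\mathbb{F}_2^n$ let $f_{\mathbf{u}}(\mathbf{x})=f(\mathbf{x})+2^{k-1}(\mathbf{u}\cdot\mathbf{x})\in\mathbb{Z}_{2^k}$ and $b_j^{(\mathbf{u})}=|\{\mathbf{x}\in\mathbb{F}_2^n: f_{\mathbf{u}}(\mathbf{x})=j\}|$ for $0\le j\le 2^k-1$. Then $f$ is gbent if and only if for every $\mathbf{u}\in\mathbb{F}_2^n$ there exists an integer $\rho_{\mathbf{u}}$ with $0\le\rho_{\mathbf{u}}\le 2^{k-1}-1$ such that $b^{(\mathbf{u})}_{2^{k-1}+\rho_{\mathbf{u}}}=b^{(\mathbf{u})}_{\rho_{\mathbf{u}}}\pm 2^m$ and $b^{(\mathbf{u})}_{2^{k-1}+j}=b^{(\mathbf{u})}_j$ for all $0\le j\le 2^{k-1}-1$ with $j\ne\rho_{\mathbf{u}}$.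
   Context: For an integer $q\ge 2$, $\zeta_q=e^{2\pi i/q}$. The generalized Walsh–Hadamard transform of $f:\mathbb{F}_2^n\to\mathbb{Z}_q$ is $\mathcal{H}^{(q)}_f(\mathbf{u})=\sum_{\mathbf{x}\in\mathbb{F}_2^n}\zeta_q^{f(\mathbf{x})}(-1)^{\mathbf{u}\cdot\mathbf{x}}$, with $\mathbf{u}\cdot\mathbf{x}$ the usual dot product over $\mathbb{F}_2$; $f$ is gbent if $|\mathcal{H}^{(q)}_f(\mathbf{u})|=2^{n/2}$ for all $\mathbf{u}$. Here $q=2^k$. *)

(* Defs.v *)
From HB Require Import structures.
From mathcomp Require Import all_boot all_order all_algebra all_field.
Set Implicit Arguments. Unset Strict Implicit. Unset Printing Implicit Defensive.
Import Order.TTheory GRing.Theory Num.Theory.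
Local Open Scope ring_scope.

(* zeta q = e^{2 pi i / q}: q.-root (-1) is e^{i pi / q} (minimal argument root) *)
Definition zeta (q : nat) : algC := (q.-root (-1)) ^+ 2.

Definition dotF2 (n : nat) (u x : 'rV['F_2]_n) : 'F_2 := \sum_(i < n) u ord0 i * x ord0 i.

Definition gwht (q n : nat) (f : 'rV['F_2]_n -> 'Z_q) (u : 'rV['F_2]_n) : algC :=
  \sum_(x : 'rV['F_2]_n) zeta q ^+ (val (f x)) * (-1) ^+ (val (dotF2 u x)).

Definition gbent (q n : nat) (f : 'rV['F_2]_n -> 'Z_q) : Prop :=
  forall u : 'rV['F_2]_n, `|gwht f u| = sqrtC (2 ^+ n).

Definition fshift (k n : nat) (f : 'rV['F_2]_n -> 'Z_(2 ^ k)) (u x : 'rV['F_2]_n)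
  : 'Z_(2 ^ k) := f x + (2 ^ k.-1)%:R * (val (dotF2 u x))%:R.

Definition bcount (k n : nat) (f : 'rV['F_2]_n -> 'Z_(2 ^ k)) (u : 'rV['F_2]_n)
  (j : nat) : nat := #|[set x : 'rV['F_2]_n | fshift f u x == (j%:R : 'Z_(2 ^ k))]|.

(* Main.v *)
Require Import Defs.
From HB Require Import structures.
From mathcomp Require Import all_boot all_order all_algebra all_field.
From mathcomp Require Import ring lra zify.
Import Order.TTheory GRing.Theory Num.Theory.
Local Open Scope ring_scope.

Lemma cjB (x y : algC) : (x - y)^* = x^* - y^*. Proof. exact: rmorphB. Qed.
Lemma cjD (x y : algC) : (x + y)^* = x^* + y^*. Proof. exact: rmorphD. Qed.
Lemma cjM (x y : algC) : (x * y)^* = x^* * y^*. Proof. exact: rmorphM. Qed.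
Lemma cjN (x : algC) : (- x)^* = - x^*. Proof. exact: rmorphN. Qed.
Lemma cjX (x : algC) n : (x ^+ n)^* = x^* ^+ n. Proof. exact: rmorphXn. Qed.
Lemma cjdiv (x y : algC) : (x / y)^* = x^* / y^*. Proof. exact: fmorph_div. Qed.
Lemma cjint (c : int) : (c%:~R : algC)^* = c%:~R. Proof. exact: rmorph_int. Qed.
Lemma cjnat (n : nat) : (n%:R : algC)^* = n%:R. Proof. exact: rmorph_nat. Qed.
Lemma cj1 : (1 : algC)^* = 1. Proof. exact: rmorph1. Qed.

Lemma oddE (x : int) : odd `|x|%N = ~~ (2 %| x)%Z.
Proof. by rewrite dvdzE dvdn2 negbK. Qed.

Lemma cjsum n (F : 'I_n -> algC) : (\sum_(i < n) F i)^* = \sum_(i < n) (F i)^*.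
Proof. exact: rmorph_sum. Qed.

Lemma sumsq1 n (B : nat -> int) : \sum_(i < n) B i ^+ 2 = 1 ->
  exists2 r : 'I_n, B r = 1 \/ B r = -1 & forall j : 'I_n, j != r -> B j = 0.
Proof.
move=> H.
have [i Hi | none] := pickP (fun i : 'I_n => B i != 0); last first.
  by move: H; rewrite big1 // => i _; move/negbFE/eqP: (none i) => ->; rewrite expr0n.
exists i.
  have R0 : 0 <= \sum_(j < n | j != i) B j ^+ 2 by apply: sumr_ge0 => j _; apply: sqr_ge0.
  have I1 : 1 <= B i ^+ 2.
    rewrite expr2; move: Hi; set x := B i => Hi.
    move/eqP: Hi => Hi; nia.
  move: H; rewrite (bigD1 i) //= => H.
  have : B i ^+ 2 = 1.
    move: H I1 R0; set x := B i ^+ 2; set y := \sum_(j < n | j != i) B j ^+ 2; lia.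
  by move/eqP; rewrite sqrf_eq1 => /orP [] /eqP; [left|right].
move=> j ji; apply/eqP; rewrite -sqrf_eq0; apply/eqP.
have R0 : 0 <= \sum_(j < n | j != i) B j ^+ 2 by apply: sumr_ge0 => l _; apply: sqr_ge0.
have I1 : 1 <= B i ^+ 2.
  rewrite expr2; move: Hi; set x := B i => /eqP Hi; nia.
move: H; rewrite (bigD1 i) //= => H.
have : \sum_(j < n | j != i) B j ^+ 2 = 0.
  move: H I1 R0; set x := B i ^+ 2; set y := \sum_(j < n | j != i) B j ^+ 2; lia.
move/eqP; rewrite psumr_eq0 => [/allP /(_ j (mem_index_enum _))|l _]; last exact: sqr_ge0.
by rewrite ji /= => /eqP.
Qed.

Section Cyc.
Variable a : nat.
Local Notation N := (2 ^ a)%N.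
Variable z : algC.
Hypothesis zprim : (2 * N).-primitive_root z.
Hypothesis zN : z ^+ N = -1.
Local Notation pi := (1 - z).

Lemma z_Aint : z \in Aint. Proof. exact: Aint_prim_root zprim. Qed.

Lemma pi_neq0 : pi != 0.
Proof.
rewrite subr_eq0 eq_sym; apply/eqP => z1; move/eqP: zN.
by rewrite z1 expr1n -subr_eq0 opprK -mulr2n pnatr_eq0.
Qed.

Lemma pi_Aint : pi \in Aint. Proof. by rewrite rpredB ?z_Aint. Qed.

Lemma dv_1subX m : (1 - z ^+ m) = pi * \sum_(i < m) z ^+ i.
Proof. by rewrite -opprB subrX1 -mulNr opprB. Qed.

Lemma dvpi_1subX m : (1 - z ^+ m) / pi \in Aint.
Proof.
rewrite dv_1subX [pi * _]mulrC mulfK ?pi_neq0 //.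
by apply: rpred_sum => i _; rewrite rpredX ?z_Aint.
Qed.

Lemma two_pi : 2 / pi \in Aint.
Proof. by have := dvpi_1subX N; rewrite zN opprK. Qed.

Lemma frob b : exists q, [/\ q \in Aint, q / pi \in Aint &
  pi ^+ (2 ^ b) = (1 - z ^+ (2 ^ b)) + 2 * q].
Proof.
elim: b => [|b [q [qA qpi Hq]]].
  by exists 0; rewrite !expn0 !expr1 mulr0 addr0 rpred0 mul0r rpred0.
have [w Hw] : {w | w = z ^+ (2 ^ b)} by exists (z ^+ (2 ^ b)).
rewrite -Hw in Hq.
exists (- w * (1 - w) + 2 * q * (1 - w) + 2 * q ^+ 2).
have wA : w \in Aint by rewrite Hw rpredX ?z_Aint.
have XA : 1 - w \in Aint by rewrite rpredB.
have XpA : (1 - w) / pi \in Aint by rewrite Hw dvpi_1subX.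
have qq : q = q / pi * pi by rewrite mulfVK ?pi_neq0.
split.
- by rewrite !rpredD ?rpredM ?rpredX ?rpredN ?rpred_nat.
- have -> : (- w * (1 - w) + 2 * q * (1 - w) + 2 * q ^+ 2) / pi =
     - w * ((1 - w) / pi) + 2 * (1 - w) * (q / pi) + 2 * q * (q / pi).
    by field; rewrite pi_neq0.
  have two : (2 : algC) \in Aint by rewrite rpred_nat.
  apply: rpredD; first apply: rpredD.
  + by apply: rpredM => //; rewrite rpredN.
  + by apply: rpredM => //; apply: rpredM.
  + by apply: rpredM => //; apply: rpredM.
- rewrite expnS mulnC !exprM Hq -Hw. ring.
Qed.


Lemma s_ex : exists s, [/\ s \in Aint, (s - 1) / pi \in Aint & pi ^+ N = 2 * s].
Proof.
have [q [qA qpi Hq]] := frob a.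
exists (1 + q); split.
- by apply: rpredD.
- by have -> : 1 + q - 1 = q by ring.
- by rewrite Hq zN opprK mulrDr mulr1.
Qed.

Lemma z_neq0 : z != 0.
Proof. by apply/eqP => z0; move: zN; rewrite z0 expr0n expn_eq0 /= => /eqP; rewrite eq_sym oppr_eq0 oner_eq0. Qed.

Lemma odd_ndv (c : int) : odd `|c|%N -> c%:~R / pi \notin Aint.
Proof.
move=> oc; apply/negP => H; have [s [sA _ Hs]] := s_ex.
have s0 : s != 0.
  apply/eqP => s0; move: Hs; rewrite s0 mulr0 => /eqP; rewrite expf_eq0.
  by rewrite (negPf pi_neq0) andbF.
have HA : (c%:~R ^+ N / 2 : algC) \in Aint.
  have -> : (c%:~R ^+ N / 2 : algC) = (c%:~R / pi) ^+ N * s.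
    by rewrite expr_div_n Hs; field; rewrite s0.
  by apply: rpredM => //; apply: rpredX.
have HQ : (c%:~R ^+ N / 2 : algC) \in Crat.
  by apply: rpred_div; [apply: rpredX; apply: rpred_int | apply: rpred_nat].
have /intrP[w Hw] := Cint_rat_Aint HQ HA.
have : c ^+ N = 2 * w.
  apply: (@intr_inj algC); rewrite rmorphXn rmorphM /= -Hw.
  by rewrite (_ : 2%:~R = 2) //; field.
move/(congr1 (fun x : int => odd `|x|%N)); rewrite abszX abszM oddX oddM /=.
by rewrite expn_eq0 /= oc.
Qed.

Definition pu (x : algC) := x \in Aint /\
  exists2 c : int, odd `|c|%N & (x - c%:~R) / pi \in Aint.

Lemma pu_ndv x : pu x -> x / pi \notin Aint.
Proof.
move=> [xA [c oc H]]; apply/negP => H2; move/negP: (odd_ndv _ oc); apply.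
have -> : c%:~R / pi = x / pi - (x - c%:~R) / pi by field; rewrite pi_neq0.
by apply: rpredB.
Qed.

Lemma puM x y : pu x -> pu y -> pu (x * y).
Proof.
move=> [xA [c oc Hx]] [yA [d od Hy]]; split; first by apply: rpredM.
exists (c * d); first by rewrite abszM oddM oc od.
have -> : (x * y - (c * d)%:~R) / pi = (x - c%:~R) / pi * y + c%:~R * ((y - d%:~R) / pi).
  by rewrite intrM; field; rewrite pi_neq0.
by apply: rpredD; apply: rpredM => //; apply: rpred_int.
Qed.

Lemma puX x n : pu x -> pu (x ^+ n).
Proof.
move=> px; elim: n => [|n IH]; last by rewrite exprS; apply: puM.
split; rewrite ?expr0 //; exists 1 => //.
by rewrite subrr mul0r.
Qed.

Lemma puN x : pu x -> pu (- x).
Proof.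
move=> [xA [c oc Hx]]; split; first by rewrite rpredN.
exists (- c); first by rewrite abszN.
by rewrite intrN -opprD mulNr rpredN.
Qed.

Lemma normz : `|z| = 1.
Proof.
apply/eqP; rewrite -(@pexpr_eq1 _ _ (2 * N)) ?normr_ge0 //.
  by rewrite -normrX prim_expr_order // normr1.
by rewrite muln_gt0 expn_gt0.
Qed.

Local Notation e := (- z ^+ (2 * N).-1).

Lemma zzinv : z * z ^+ (2 * N).-1 = 1.
Proof.
rewrite -exprS prednK ?prim_expr_order //.
by rewrite muln_gt0 expn_gt0.
Qed.

Lemma conjz : z^* = z ^+ (2 * N).-1.
Proof.
apply: (mulfI z_neq0); rewrite zzinv -normCK normz expr1n //.
Qed.

Lemma conjpi : pi^* = e * pi.
Proof.
rewrite cjB cj1.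
rewrite conjz mulrBr mulr1 mulNr mulrC zzinv.
by rewrite opprK addrC.
Qed.

Lemma e_Aint : e \in Aint.
Proof. by rewrite rpredN rpredX ?z_Aint. Qed.

Lemma e_neq0 : e != 0.
Proof. by rewrite oppr_eq0 expf_neq0 ?z_neq0. Qed.

Lemma conj_Aint x : (x^* \in Aint) = (x \in Aint).
Proof. exact: Aint_aut. Qed.

Lemma pu_conj x : pu x -> pu (x^*).
Proof.
move=> [xA [c oc Hx]]; split; first by rewrite conj_Aint.
exists c => //.
have -> : (x^* - c%:~R) / pi = e * ((x - c%:~R) / pi)^*.
  rewrite cjdiv cjB cjint conjpi.
  by field; rewrite pi_neq0 expf_neq0 ?z_neq0.
by apply: rpredM; rewrite ?e_Aint ?conj_Aint.
Qed.

Lemma pu_e : pu e.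
Proof.
split; first exact: e_Aint.
exists (-1) => //.
have -> : (e - (-1)%:~R) / pi = e.
  have H : e + 1 = e * pi by rewrite mulrBr mulr1 mulNr opprK mulrC zzinv.
  by rewrite (_ : (-1)%:~R = -1) // opprK H mulfK ?pi_neq0.
exact: e_Aint.
Qed.


Definition ev (A : {poly int}) : algC := (map_poly (intr : int -> algC) A).[z].

Lemma ev_Aint A : ev A \in Aint.
Proof.
rewrite /ev horner_coef; apply: rpred_sum => i _.
by apply: rpredM; [rewrite coef_map; apply: rpred_int | apply: rpredX; apply: z_Aint].
Qed.

Lemma ev_fact (Q : {poly int}) (c : int) :
  ev (Q * ('X - 1%:P) + c%:P) = - pi * ev Q + c%:~R.
Proof.
rewrite /ev rmorphD rmorphM /= map_polyXsubC map_polyC /= hornerD hornerM.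
by rewrite hornerXsubC hornerC rmorph1; ring.
Qed.

Lemma decomp (A : {poly int}) : (exists i, odd (absz A`_i)) ->
  exists v g h, [/\ (v < size A)%N, pu g, h \in Aint & ev A = pi ^+ v * g + 2 * h].
Proof.
have [n] := ubnP (size A); elim: n A => // n IH A HA [i oi].
have A0 : A != 0 by apply: contraTneq oi => ->; rewrite coef0.
have szA : (0 < size A)%N by rewrite size_poly_gt0.
set c := A.[1].
have /factor_theorem [Q HQ] : root (A - c%:P) 1.
  by rewrite rootE hornerD hornerN hornerC subrr.
have DA : A = Q * ('X - 1%:P) + c%:P by rewrite -HQ subrK.
have evA : ev A = - pi * ev Q + c%:~R by rewrite {1}DA ev_fact.
have [oc | ec] := boolP (odd `|c|%N).
  exists 0%N, (ev A), 0; split.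
  - done.
  - split; first exact: ev_Aint.
    exists c => //.
    have -> : (ev A - c%:~R) / pi = - ev Q by rewrite evA; field; rewrite pi_neq0.
    by rewrite rpredN ev_Aint.
  - by rewrite rpred0.
  - by rewrite expr0 mul1r mulr0 addr0.
have oQ : exists j, odd (absz Q`_j).
  have [/existsP[j oj] | /existsPn H] := boolP [exists j : 'I_(size Q), odd (absz Q`_j)].
    by exists j.
  have Qe j : (2 %| Q`_j)%Z.
    have [lt | ge] := ltnP j (size Q).
      by have := H (Ordinal lt); rewrite oddE negbK.
    by rewrite nth_default.
  exfalso; move: oi; rewrite oddE DA coefD mulrBr mulr1 coefB coefMX coefC => /negP; apply.
  move: ec; rewrite oddE negbK => ec.
  by case: (i == 0%N); rewrite ?rpred0 ?sub0r ?addr0 ?rpredD ?rpredN ?rpredB ?Qe.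
have [j oj] := oQ.
have Q0 : Q != 0 by apply: contraTneq oj => ->; rewrite coef0.
have szQ : ((size Q).+1 <= size A)%N.
  have <- : size (A - c%:P) = (size Q).+1.
    by rewrite HQ size_Mmonic ?monicXsubC // size_XsubC addn2.
  rewrite (leq_trans (size_polyD _ _)) // geq_max leqnn size_polyN.
  exact: leq_trans (size_polyC_leq1 c) szA.
have [v [g [h [vlt pg hA Hev]]]] := IH Q (leq_trans szQ HA) oQ.
move: ec; rewrite oddE negbK => ec.
exists v.+1, (- g), ((c %/ 2)%Z%:~R - pi * h); split.
- exact: leq_ltn_trans vlt szQ.
- exact: puN.
- by apply: rpredB; [apply: rpred_int | apply: rpredM; [exact: pi_Aint|]].
- rewrite evA Hev -{1}(divzK ec) intrM (_ : 2%:~R = 2) // exprS; ring.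
Qed.

Lemma claimC (A : {poly int}) : (size A <= N)%N ->
  ev A * (ev A)^* / 4 \in Aint -> forall i, ~~ odd (absz A`_i).
Proof.
move=> szA yA i; apply/negP => oi.
have [v [g [h [vlt pg hA Hev]]]] := @decomp A (ex_intro _ i oi).
have vN : (v < N)%N := leq_trans vlt szA.
have [s [sA ps Hs]] := s_ex.
have pus : pu s by split => //; exists 1.
set d := (N - v.+1)%N.
have Nd : N = (v + d).+1 by rewrite /d -addSn subnKC.
have sdef : s = pi ^+ v * pi ^+ d * pi / 2.
  by rewrite -exprD -exprSr -Nd Hs; field.
set y := ev A * (ev A)^* / 4 in yA.
have hcA : h^* \in Aint by rewrite conj_Aint.
have gA : g \in Aint by case: pg.
have gcA : g^* \in Aint by rewrite conj_Aint.
have eA := e_Aint.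
set W := g * h^* + e ^+ v * g^* * h.
have WA : W \in Aint.
  by apply: rpredD; apply: rpredM => //; apply: rpredM => //; apply: rpredX.
have Key : e ^+ v * g * g^* * s ^+ 2 / pi =
   pi ^+ d * pi ^+ d * pi * y - pi ^+ d * s * W - pi ^+ d * pi ^+ d * pi * (h * h^*).
  rewrite /y /W Hev cjD !cjM cjX conjpi cjnat exprMn sdef.
  by field; rewrite pi_neq0.
have : e ^+ v * g * g^* * s ^+ 2 / pi \in Aint.
  rewrite Key; apply: rpredB; first apply: rpredB.
  - by apply: rpredM => //; apply: rpredM; [apply: rpredM|]; rewrite ?pi_Aint ?rpredX ?pi_Aint.
  - by apply: rpredM => //; apply: rpredM => //; apply: rpredX; apply: pi_Aint.
  - by apply: rpredM; [apply: rpredM; [apply: rpredM|]; rewrite ?pi_Aint ?rpredX ?pi_Aint | apply: rpredM].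
apply/negP; apply: pu_ndv.
apply: puM; last exact: puX.
apply: puM; last exact: pu_conj.
apply: puM => //; exact: puX pu_e.
Qed.

Lemma descent m (A : {poly int}) : (size A <= N)%N ->
  ev A * (ev A)^* = 4 ^+ m -> forall i, (2 ^+ m %| A`_i)%Z.
Proof.
elim: m A => [|m IH] A szA H i; first by rewrite expr0 dvd1z.
have ye : forall j, (2 %| A`_j)%Z.
  move=> j; have := @claimC A szA _ j; rewrite oddE negbK; apply.
  by rewrite H exprS [4 * _]mulrC mulfK ?pnatr_eq0 // rpredX ?rpred_nat.
set A' := \poly_(j < size A) (A`_j %/ 2)%Z.
have DA : A = 2 *: A'.
  apply/polyP => j; rewrite coefZ coef_poly.
  case: ltnP => jl; first by rewrite mulrC divzK.
  by rewrite mulr0 nth_default.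
have evA : ev A = 2 * ev A'.
  by rewrite /ev {1}DA map_polyZ hornerZ /=.
have szA' : (size A' <= N)%N by exact: leq_trans (size_poly _ _) szA.
have H' : ev A' * (ev A')^* = 4 ^+ m.
  apply: (@mulfI _ 4); first by rewrite pnatr_eq0.
  rewrite -exprS -H evA cjM cjnat; ring.
have := IH A' szA' H' i.
rewrite DA coefZ exprS; apply: dvdz_mul; exact: dvdzz.
Qed.

Lemma transfer (P : {poly int}) t : coprime t (2 * N) ->
  (map_poly (intr : int -> algC) P).[z] = 0 ->
  (map_poly (intr : int -> algC) P).[z ^+ t] = 0.
Proof.
move=> ct Pz.
have [p [Dp mon] dvd] := minCpolyP z.
rewrite (minCpoly_cyclotomic zprim) in Dp.
set q := map_poly (intr : int -> rat) P.
have Eq : map_poly ratr q = map_poly (intr : int -> algC) P.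
  rewrite -map_poly_comp; apply: eq_map_poly => x /=; exact: rmorph_int.
have pq : p %| q by rewrite -dvd Eq /root Pz.
have : cyclotomic z (2 * N) %| map_poly (intr : int -> algC) P.
  by rewrite Dp -Eq dvdp_map.
move/root_dvdp => /(_ (z ^+ t)); rewrite root_cyclotomic //.
by rewrite prim_root_exp_coprime // ct => /(_ isT) /eqP.
Qed.

Lemma N_gt0 : (0 < N)%N. Proof. by rewrite expn_gt0. Qed.

Lemma z2prim : N.-primitive_root (z ^+ 2).
Proof.
have := exp_prim_root zprim 2; rewrite gcdnMr mulKn //.
Qed.

Lemma geom0 (w : algC) : w ^+ N = 1 -> w != 1 -> \sum_(s < N) w ^+ s = 0.
Proof.
move=> wN w1; have := subrX1 w N; rewrite wN subrr => /esym /eqP.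
by rewrite mulf_eq0 subr_eq0 (negPf w1) /= => /eqP.
Qed.

Lemma orth (i j : nat) : (i < N)%N -> (j < N)%N ->
  \sum_(s < N) (z ^+ (2 * s + 1)) ^+ i * ((z ^+ (2 * s + 1)) ^+ (2 * N).-1) ^+ j
    = if i == j then N%:R else 0.
Proof.
move=> iN jN; set M := (2 * N).-1; set E := (i + M * j)%N.
have z2N : z ^+ (2 * N) = 1 by rewrite prim_expr_order.
have Es : forall s : nat, (z ^+ (2 * s + 1)) ^+ i * ((z ^+ (2 * s + 1)) ^+ M) ^+ j
    = z ^+ E * (z ^+ (2 * E)) ^+ s.
  move=> s; rewrite -!exprM -!exprD; congr (z ^+ _).
  rewrite /E; ring.
under eq_bigr => s _ do rewrite Es.
rewrite -mulr_sumr.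
have ME : (M + 1 = 2 * N)%N by rewrite addn1 prednK // muln_gt0 N_gt0.
case: eqP => [eij | ij].
  have E2 : E = (2 * N * i)%N by rewrite /E -eij -ME mulnDl mul1n addnC mulnC.
  rewrite E2 mulnCA !(exprM z (2 * N)) z2N !expr1n mul1r.
  rewrite (eq_bigr (fun _ => 1)) ?sumr_const ?card_ord // => s _; exact: expr1n.
apply/eqP; rewrite mulf_eq0; apply/orP; right; apply/eqP; apply: geom0.
  by rewrite -exprM mulnC mulnA (mulnC N 2) exprM z2N expr1n.
apply/eqP => w1; apply: ij.
have : (z ^+ 2) ^+ i = (z ^+ 2) ^+ j.
  have H1 : z ^+ (2 * E) * (z ^+ 2) ^+ j = (z ^+ 2) ^+ i.
    rewrite -!exprM -exprD; rewrite /E.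
    have -> : (2 * (i + M * j) + 2 * j = 2 * i + 2 * N * (2 * j))%N.
      rewrite -ME; ring.
    by rewrite exprD (exprM z (2 * N)) z2N expr1n mulr1.
  by rewrite -H1 w1 mul1r.
by move/eqP; rewrite (eq_prim_root_expr z2prim) !modn_small // => /eqP.
Qed.

Lemma parseval (B : {poly int}) : (size B <= N)%N ->
  ev B * (ev B)^* = 1 -> \sum_(i < N) B`_i ^+ 2 = 1.
Proof.
move=> szB H.
set M := (2 * N).-1.
set Bc := map_poly (intr : int -> algC) B.
have szBc : (size Bc <= N)%N.
  by rewrite /Bc size_map_inj_poly //; apply: intr_inj.
have conjE : (ev B)^* = Bc.[z ^+ M].
  rewrite /ev -/Bc !horner_coef cjsum; apply: eq_bigr => i _.
  by rewrite cjM cjX coef_map cjint conjz.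
have root1 t : coprime t (2 * N) -> Bc.[z ^+ t] * Bc.[(z ^+ t) ^+ M] = 1.
  move=> ct; set P : {poly int} := B * (B \Po 'X^M) - 1.
  have mP x : (map_poly (intr : int -> algC) P).[x] = Bc.[x] * Bc.[x ^+ M] - 1.
    rewrite /P rmorphB rmorphM rmorph1 /= map_comp_poly map_polyXn.
    by rewrite hornerD hornerN hornerM horner_comp hornerXn hornerC.
  have := @transfer P t ct; rewrite !mP => h; apply/eqP; rewrite -subr_eq0 h //.
  by rewrite -conjE H subrr.
have S : \sum_(s < N) Bc.[z ^+ (2 * s + 1)] * Bc.[(z ^+ (2 * s + 1)) ^+ M] = N%:R.
  rewrite (eq_bigr (fun _ => 1)) ?sumr_const ?card_ord // => s _; apply: root1.
  by rewrite -expnS coprime_pexpr // coprimen2 addn1 /= oddM.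
have S2 : \sum_(s < N) Bc.[z ^+ (2 * s + 1)] * Bc.[(z ^+ (2 * s + 1)) ^+ M] =
   \sum_(i < N) \sum_(j < N) Bc`_i * Bc`_j * (if (i : nat) == j then N%:R else 0).
  transitivity (\sum_(s < N) \sum_(i < N) \sum_(j < N)
     (Bc`_i * (z ^+ (2 * s + 1)) ^+ i) * (Bc`_j * ((z ^+ (2 * s + 1)) ^+ M) ^+ j)).
    apply: eq_bigr => s _; rewrite !(horner_coef_wide _ szBc) mulr_suml.
    by apply: eq_bigr => i _; rewrite mulr_sumr.
  rewrite exchange_big; apply: eq_bigr => i _.
  rewrite exchange_big; apply: eq_bigr => j _.
  rewrite -orth // mulr_sumr; apply: eq_bigr => s _; ring.
have S3 : \sum_(i < N) Bc`_i ^+ 2 * N%:R = N%:R.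
  symmetry; rewrite -[LHS]S S2; apply: eq_bigr => i _.
  rewrite (bigD1 i) //= eqxx big1 ?addr0 => [|j /negPf ji]; first by rewrite expr2.
  by rewrite (_ : ((i : nat) == j) = false) ?mulr0 // eq_sym; apply: ji.
have S4 : \sum_(i < N) Bc`_i ^+ 2 = 1.
  apply: (@mulIf _ N%:R); first by rewrite pnatr_eq0 -lt0n N_gt0.
  by rewrite mul1r -[RHS]S3 mulr_suml.
apply: (@intr_inj algC); rewrite rmorph_sum /= rmorph1 -[RHS]S4; apply: eq_bigr => i _.
by rewrite /Bc coef_map /= rmorphXn.
Qed.

Lemma core (A : {poly int}) m : (size A <= N)%N ->
  (`|ev A| = 2 ^+ m) <->
  exists2 r : 'I_N, (A`_r = (2 ^ m)%N%:Z \/ A`_r = - (2 ^ m)%N%:Z) &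
     forall j : 'I_N, j != r -> A`_j = 0.
Proof.
have e2m : ((2 ^ m)%N%:Z = 2 ^+ m) by rewrite -natz natrX.
move=> szA; split => [Hn | [r Hr H0]].
  have H4 : ev A * (ev A)^* = 4 ^+ m.
    by rewrite -normCK Hn -exprM mulnC exprM (_ : (2 : algC) ^+ 2 = 4) // expr2 -natrM.
  have dv := @descent m A szA H4.
  set B := \poly_(i < size A) (A`_i %/ 2 ^+ m)%Z.
  have DA : A = (2 ^+ m) *: B.
    apply/polyP => j; rewrite coefZ coef_poly.
    case: ltnP => jl; first by rewrite mulrC divzK.
    by rewrite mulr0 nth_default.
  have evA : ev A = 2 ^+ m * ev B.
    rewrite /ev {1}DA map_polyZ hornerZ /= rmorphXn /=.
    by rewrite (_ : 2%:~R = 2).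
  have szB : (size B <= N)%N by exact: leq_trans (size_poly _ _) szA.
  have HB : ev B * (ev B)^* = 1.
    apply: (@mulfI _ (4 ^+ m)); first by rewrite expf_neq0 // pnatr_eq0.
    rewrite mulr1 -[RHS]H4 evA cjM cjX cjnat.
    rewrite (_ : (4 : algC) = 2 * 2); last by rewrite -natrM.
    by rewrite exprMn; ring.
  have [r Hr H0] := @sumsq1 N (fun i => B`_i) (@parseval B szB HB).
  exists r.
    by rewrite DA coefZ e2m; case: Hr => ->; [left; rewrite mulr1 | right; rewrite mulrN1].
  by move=> j jr; rewrite DA coefZ H0 ?mulr0.
have szM : (size (map_poly (intr : int -> algC) A) <= N)%N.
  by rewrite size_map_inj_poly //; apply: intr_inj.
rewrite /ev (horner_coef_wide _ szM) (bigD1 r) //= big1 ?addr0; last first.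
  by move=> j jr; rewrite coef_map H0 // mul0r.
rewrite coef_map normrM normrX normz expr1n mulr1.
have H2 : `|(2 ^+ m : int)%:~R : algC| = 2 ^+ m.
  by rewrite rmorphXn /= normrX (_ : 2%:~R = 2) // normr_nat.
rewrite e2m in Hr; case: Hr => ->; first exact: H2.
have H3 : `|((- 2 ^+ m : int)%:~R : algC)| = 2 ^+ m by rewrite intrN normrN H2.
exact: H3.
Qed.

End Cyc.

Lemma zeta_facts k : (0 < k)%N ->
  (2 * 2 ^ k.-1).-primitive_root (zeta (2 ^ k)) /\ zeta (2 ^ k) ^+ (2 ^ k.-1) = -1.
Proof.
move=> k0; have p2N : (2 ^ k = 2 * 2 ^ k.-1)%N by rewrite -expnS prednK.
have zN : zeta (2 ^ k) ^+ (2 ^ k.-1) = -1.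
  by rewrite /zeta -exprM -p2N rootCK // expn_gt0.
split => //.
have z1 : zeta (2 ^ k) ^+ (2 * 2 ^ k.-1) = 1.
  by rewrite mulnC exprM zN expr2 mulrNN mulr1.
have n0 : (0 < 2 * 2 ^ k.-1)%N by rewrite muln_gt0 expn_gt0.
have [d pd dd] := prim_order_exists n0 z1.
have : (d %| 2 ^ k)%N by rewrite p2N.
move/(@dvdn_pfactor 2 d k isT) => [i ik di].
have : i = k.
  case: (ltnP i k) => [ik'|ki]; last by apply/eqP; rewrite eqn_leq ik ki.
  exfalso.
  have : (d %| 2 ^ k.-1)%N by rewrite di dvdn_exp2l // -ltnS prednK.
  rewrite (prim_order_dvd pd) zN => /eqP /esym /eqP.
  by rewrite -subr_eq0 opprK -mulr2n pnatr_eq0.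
by move=> ik''; move: pd; rewrite di ik'' p2N.
Qed.

Lemma sum_eqK (K1 K2 : nat) (F : nat -> algC) :
  K1 = K2 -> \sum_(j < K1) F j = \sum_(j < K2) F j.
Proof. by move=> ->. Qed.

Lemma gwht_ev k n (f : 'rV['F_2]_n -> 'Z_(2 ^ k)) u : (0 < k)%N ->
  gwht f u = ev (zeta (2 ^ k))
    (\poly_(j < 2 ^ k.-1) ((bcount f u j)%:Z - (bcount f u (2 ^ k.-1 + j))%:Z)).
Proof.
move=> k0; set N := (2 ^ k.-1)%N; set z := zeta (2 ^ k).
have [zprim zN] := @zeta_facts k k0.
have p2N : (2 ^ k = 2 * N)%N by rewrite -expnS prednK.
have N0 : (0 < N)%N by rewrite expn_gt0.
have p1 : (1 < 2 ^ k)%N by rewrite p2N; lia.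
have zprim' : (2 ^ k).-primitive_root z by rewrite p2N.
have phiD (y1 y2 : 'Z_(2 ^ k)) : z ^+ val (y1 + y2) = z ^+ val y1 * z ^+ val y2.
  have zp : ((Zp_trunc (2 ^ k)).+2).-primitive_root z by rewrite Zp_cast.
  by rewrite /= (prim_expr_mod zp) exprD.
have phin n0 : z ^+ val (n0%:R : 'Z_(2 ^ k)) = z ^+ n0.
  change (z ^+ nat_of_ord (n0%:R : 'Z_(2 ^ k)) = z ^+ n0).
  by rewrite val_Zp_nat // prim_expr_mod.
have term x : zeta (2 ^ k) ^+ val (f x) * (-1) ^+ val (dotF2 u x) = z ^+ val (fshift f u x).
  by rewrite /fshift phiD -natrM phin exprM zN.
rewrite /gwht; under eq_bigr => x _ do rewrite term.
rewrite (partition_big (fun x => fshift f u x) xpredT) //.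
transitivity (\sum_(j : 'Z_(2 ^ k)) (bcount f u (val j))%:R * z ^+ val j).
  apply: eq_bigr => j _.
  rewrite (eq_bigr (fun _ => z ^+ val j)) => [|x /eqP -> //].
  rewrite sumr_const mulr_natl /bcount natr_Zp; congr (_ *+ _).
  by apply: eq_card => x; rewrite inE.
transitivity (\sum_(j < (Zp_trunc (2 ^ k)).+2) (bcount f u j)%:R * z ^+ j) => //.
rewrite (@sum_eqK _ (N + N) (fun j => (bcount f u j)%:R * z ^+ j)); last first.
  by rewrite Zp_cast // p2N addnn mul2n.
rewrite big_split_ord /=.
set P := \poly_(j < N) ((bcount f u j)%:Z - (bcount f u (N + j))%:Z).
have szM : (size (map_poly (intr : int -> algC) P) <= N)%N.
  by rewrite size_map_inj_poly //; [apply: size_poly | apply: intr_inj].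
rewrite /ev (horner_coef_wide _ szM) -big_split; apply: eq_bigr => i _ /=.
rewrite coef_map /P coef_poly ltn_ord /= exprD zN intrB -!pmulrn; ring.
Qed.

Theorem mainTheorem3 (k n m : nat) (f : 'rV['F_2]_n -> 'Z_(2 ^ k)) :
  (1 < k)%N -> n = (2 * m)%N ->
  (gbent f <->
   forall u : 'rV['F_2]_n, exists rho : nat,
     (rho <= 2 ^ k.-1 - 1)%N /\
     ((bcount f u (2 ^ k.-1 + rho))%:Z = (bcount f u rho)%:Z + (2 ^ m)%:Z \/
      (bcount f u (2 ^ k.-1 + rho))%:Z = (bcount f u rho)%:Z - (2 ^ m)%:Z) /\
     (forall j : nat, (j <= 2 ^ k.-1 - 1)%N -> j <> rho ->
        bcount f u (2 ^ k.-1 + j) = bcount f u j)).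
Proof.
move=> k1 nm.
have k0 : (0 < k)%N by exact: ltnW.
have [zprim zN] := @zeta_facts k k0.
have N0 : (0 < 2 ^ k.-1)%N by rewrite expn_gt0.
have sq : sqrtC (2 ^+ n : algC) = 2 ^+ m.
  by rewrite nm mulnC exprM sqrCK // exprn_ge0 // ler0n.
have key u : `|gwht f u| = sqrtC (2 ^+ n) <->
   (exists rho : nat,
     (rho <= 2 ^ k.-1 - 1)%N /\
     ((bcount f u (2 ^ k.-1 + rho))%:Z = (bcount f u rho)%:Z + (2 ^ m)%:Z \/
      (bcount f u (2 ^ k.-1 + rho))%:Z = (bcount f u rho)%:Z - (2 ^ m)%:Z) /\
     (forall j : nat, (j <= 2 ^ k.-1 - 1)%N -> j <> rho ->
        bcount f u (2 ^ k.-1 + j) = bcount f u j)).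
  rewrite sq (@gwht_ev k n f u k0).
  rewrite (@core k.-1 (zeta (2 ^ k)) zprim zN _ m (size_poly _ _)).
  split.
  - case=> r Hr H0; exists r; split; first by have := ltn_ord r; lia.
    split.
      move: Hr; rewrite coef_poly ltn_ord.
      by case=> Hr; [right | left]; lia.
    move=> j jle jr.
    have jN : (j < 2 ^ k.-1)%N by lia.
    have := H0 (Ordinal jN); rewrite coef_poly jN.
    have -> : (Ordinal jN != r) by apply/eqP => /(congr1 val) /=.
    by move=> /(_ isT) /=; lia.
  - case=> rho [rle [Hr H0]].
    have rN : (rho < 2 ^ k.-1)%N by lia.
    exists (Ordinal rN).
      by rewrite coef_poly rN /=; case: Hr => Hr; [right | left]; lia.
    move=> j jr; rewrite coef_poly ltn_ord.
    have := H0 j _ _; rewrite -/(nat_of_ord j).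
    have jle : (j <= 2 ^ k.-1 - 1)%N by have := ltn_ord j; lia.
    have jr' : (j : nat) <> rho by move=> E; move/eqP: jr; apply; apply: val_inj.
    by move=> /(_ jle jr'); lia.
split => H u; first exact/key.
exact/key.
Qed.
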